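(* For all real $a,b$, $$|\Phi(a)-\Phi(b)|\ge|a-b|\sqrt{\varphi(a)\varphi(b)},$$ where $\varphi(x)=\frac{1}{\sqrt{2\pi}}e^{-x^2/2}$ and $\Phi(x)=\int_{-\infty}^x\varphi(t)\,dt$. *)

(* Defs.v *)
From Stdlib Require Import Reals ClassicalEpsilon.
Open Scope R_scope.

Definition phi (x : R) : R := / sqrt (2 * PI) * exp (- (x ^ 2) / 2).

(* l is the improper integral \int_{-oo}^x phi(t) dt, i.e. the limit as
   m -> +oo of the Riemann integral of phi over [-m, x]. *)
Definition Phi_is_limit (x l : R) : Prop :=
  forall eps : R, eps > 0 ->
    exists M : R, forall m : R, m >= M ->
      forall pr : Riemann_integrable phi (- m) x,
        Rabs (RiemannInt pr - l) < eps.

Definition Phi (x : R) : R := epsilon (inhabits 0) (Phi_is_limit x).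

(* Main.v *)
Require Import Defs.
From Stdlib Require Import Reals Lra ClassicalEpsilon.
From Coquelicot Require Import Coquelicot.
Open Scope R_scope.

Lemma exd_cont (f : R -> R) x : ex_derive f x -> continuous f x.
Proof. apply (@ex_derive_continuous R_AbsRing R_NormedModule). Qed.

Lemma phi_pos x : 0 < phi x.
Proof.
  unfold phi. apply Rmult_lt_0_compat; [|apply exp_pos].
  apply Rinv_0_lt_compat, sqrt_lt_R0. pose proof PI_RGT_0. lra.
Qed.

Lemma phi_cont x : continuous phi x.
Proof. apply exd_cont. unfold phi. auto_derive. auto. Qed.

Lemma phi_ex u v : ex_RInt phi u v.
Proof. apply (@ex_RInt_continuous R_CompleteNormedModule). intros; apply phi_cont. Qed.

Lemma I_chasles u v w : RInt phi u v + RInt phi v w = RInt phi u w.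
Proof. apply (RInt_Chasles phi u v w); apply phi_ex. Qed.

Lemma I_nonneg u v : u <= v -> 0 <= RInt phi u v.
Proof.
  intros H. apply RInt_ge_0; auto. apply phi_ex. intros; left; apply phi_pos.
Qed.

Definition Kc := / sqrt (2 * PI) * exp (/2).

Lemma phi_le_exp t : phi t <= Kc * exp t.
Proof.
  unfold phi, Kc. rewrite Rmult_assoc, <- exp_plus.
  apply Rmult_le_compat_l.
  - left. apply Rinv_0_lt_compat, sqrt_lt_R0. pose proof PI_RGT_0. lra.
  - destruct (Rle_lt_or_eq_dec (- (t ^ 2) / 2) (/ 2 + t)).
    + pose proof (pow2_ge_0 (t+1)). simpl in *. lra.
    + left; apply exp_increasing; auto.
    + right; f_equal; auto.
Qed.

Lemma Kc_pos : 0 < Kc.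
Proof.
  unfold Kc. apply Rmult_lt_0_compat; [|apply exp_pos].
  apply Rinv_0_lt_compat, sqrt_lt_R0. pose proof PI_RGT_0. lra.
Qed.

Lemma I_bound u x : RInt phi u x <= Kc * exp x.
Proof.
  destruct (Rle_or_lt u x) as [H|H].
  - assert (Hg : is_RInt (fun t => Kc * exp t) u x (minus (Kc * exp x) (Kc * exp u))).
    { apply (is_RInt_derive (fun t => Kc * exp t)).
      - intros. auto_derive; auto. ring.
      - intros. apply exd_cont. auto_derive. auto. }
    apply Rle_trans with (RInt (fun t => Kc * exp t) u x).
    + apply RInt_le; auto. apply phi_ex. eexists; eauto.
      intros; apply phi_le_exp.
    + rewrite (is_RInt_unique _ _ _ _ Hg). unfold minus, plus, opp; simpl.
      pose proof (exp_pos u); pose proof Kc_pos. nra.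
  - pose proof (I_nonneg x u (Rlt_le _ _ H)).
    pose proof (I_chasles u x u). rewrite RInt_point in H1.
    pose proof (exp_pos x); pose proof Kc_pos. unfold zero in H1; simpl in H1. nra.
Qed.

Lemma Phi_exists x : exists l, Phi_is_limit x l.
Proof.
  set (E := fun y => exists m, y = RInt phi (- m) x).
  assert (Hb : bound E).
  { exists (Kc * exp x). intros y [m ->]. apply I_bound. }
  assert (Hne : exists y, E y) by (exists (RInt phi (-0) x); exists 0; auto).
  destruct (completeness E Hb Hne) as [L [HL1 HL2]].
  exists L. intros eps Heps.
  assert (exists m0, RInt phi (- m0) x > L - eps) as [m0 Hm0].
  { apply NNPP. intro Hn. assert (L <= L - eps); [|lra].
    apply HL2. intros y [m ->]. destruct (Rle_or_lt (RInt phi (- m) x) (L - eps)); auto.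
    exfalso; apply Hn; exists m; lra. }
  exists m0. intros m Hm pr.
  rewrite <- (RInt_Reals phi (- m) x pr).
  assert (RInt phi (- m) x <= L) by (apply HL1; exists m; auto).
  pose proof (I_chasles (- m) (- m0) x).
  pose proof (I_nonneg (- m) (- m0) ltac:(lra)).
  apply Rabs_def1; lra.
Qed.

Lemma Phi_spec x : Phi_is_limit x (Phi x).
Proof.
  unfold Phi. apply epsilon_spec. apply Phi_exists.
Qed.

Lemma Phi_diff a b : Phi a - Phi b = RInt phi b a.
Proof.
  apply NNPP; intro Hn.
  set (d := Rabs (Phi a - Phi b - RInt phi b a)).
  assert (Hd : d > 0) by (unfold d; apply Rabs_pos_lt; lra).
  destruct (Phi_spec a (d/2) ltac:(lra)) as [M1 H1].
  destruct (Phi_spec b (d/2) ltac:(lra)) as [M2 H2].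
  set (m := Rmax M1 M2).
  specialize (H1 m (Rle_ge _ _ (Rmax_l _ _)) (ex_RInt_Reals_0 _ _ _ (phi_ex _ _))).
  specialize (H2 m (Rle_ge _ _ (Rmax_r _ _)) (ex_RInt_Reals_0 _ _ _ (phi_ex _ _))).
  rewrite <- RInt_Reals in H1, H2.
  pose proof (I_chasles (- m) b a).
  unfold d in *.
  revert H1 H2. unfold Rabs; repeat destruct Rcase_abs; lra.
Qed.

Lemma pointwise a b t : b <= t <= a ->
  2 * sqrt (phi a * phi b) <= phi t + phi (a + b - t).
Proof.
  intros Ht.
  pose proof (phi_pos t) as p1; pose proof (phi_pos (a+b-t)) as p2.
  apply Rle_trans with (2 * sqrt (phi t * phi (a + b - t))).
  - apply Rmult_le_compat_l; [lra|]. apply sqrt_le_1_alt.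
    unfold phi.
    replace (/ sqrt (2 * PI) * exp (- a ^ 2 / 2) * (/ sqrt (2 * PI) * exp (- b ^ 2 / 2)))
      with ((/ sqrt (2 * PI) * / sqrt (2 * PI)) * exp (- a ^ 2 / 2 + - b ^ 2 / 2))
      by (rewrite exp_plus; ring).
    replace (/ sqrt (2 * PI) * exp (- t ^ 2 / 2) * (/ sqrt (2 * PI) * exp (- (a+b-t) ^ 2 / 2)))
      with ((/ sqrt (2 * PI) * / sqrt (2 * PI)) * exp (- t ^ 2 / 2 + - (a+b-t) ^ 2 / 2))
      by (rewrite exp_plus; ring).
    apply Rmult_le_compat_l.
    + assert (0 < / sqrt (2 * PI)) by (apply Rinv_0_lt_compat, sqrt_lt_R0; pose proof PI_RGT_0; lra). nra.
    + destruct (Rle_lt_or_eq_dec (- a ^ 2 / 2 + - b ^ 2 / 2) (- t ^ 2 / 2 + - (a + b - t) ^ 2 / 2)).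
      * assert (Hq : (a - t) * (t - b) >= 0) by (apply Rle_ge, Rmult_le_pos; lra).
        simpl. ring_simplify. ring_simplify in Hq. lra.
      * left; apply exp_increasing; auto.
      * right; f_equal; auto.
  - rewrite sqrt_mult by lra.
    pose proof (sqrt_sqrt _ (Rlt_le _ _ p1)). pose proof (sqrt_sqrt _ (Rlt_le _ _ p2)).
    pose proof (pow2_ge_0 (sqrt (phi t) - sqrt (phi (a + b - t)))). simpl in *. nra.
Qed.

Lemma main_le a b : b <= a -> RInt phi b a >= (a - b) * sqrt (phi a * phi b).
Proof.
  intros Hab.
  assert (Hex2 : ex_RInt (fun y => phi (a + b - y)) b a).
  { apply (@ex_RInt_continuous R_CompleteNormedModule). intros. apply exd_cont. unfold phi. auto_derive. auto. }
  assert (Hsub : RInt (fun y => phi (a + b - y)) b a = RInt phi b a).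
  { pose proof (RInt_comp_lin phi (-1) (a+b) b a (phi_ex _ _)) as H.
    replace (-1 * b + (a + b)) with a in H by ring.
    replace (-1 * a + (a + b)) with b in H by ring.
    assert (Hr : RInt (fun y => scal (-1) (phi (-1 * y + (a + b)))) b a =
                 - RInt (fun y => phi (a + b - y)) b a).
    { transitivity (RInt (fun y => opp (phi (a + b - y))) b a).
      - apply RInt_ext. intros. unfold scal; simpl; unfold mult; simpl.
        replace (-1 * x + (a + b)) with (a + b - x) by ring. unfold opp; simpl; ring.
      - exact (@RInt_opp R_CompleteNormedModule _ b a Hex2). }
    pose proof (eq_trans (eq_sym H) Hr) as H3. clear H Hr. pose proof (I_chasles a b a) as H0. rewrite RInt_point in H0.
    unfold zero in H0; simpl in H0. lra. }
  assert (Hexs : ex_RInt (fun t => phi t + phi (a + b - t)) b a).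
  { exact (@ex_RInt_plus R_CompleteNormedModule _ _ b a (phi_ex b a) Hex2). }
  assert (Hle : RInt (fun _ => 2 * sqrt (phi a * phi b)) b a <=
                RInt (fun t => phi t + phi (a + b - t)) b a).
  { apply RInt_le; auto. exact (@ex_RInt_const R_CompleteNormedModule b a _).
    intros. apply pointwise. lra. }
  assert (E1 : RInt (fun _ => 2 * sqrt (phi a * phi b)) b a = (a - b) * (2 * sqrt (phi a * phi b))).
  { exact (@RInt_const R_CompleteNormedModule b a _). }
  assert (E2 : RInt (fun t => phi t + phi (a + b - t)) b a = RInt phi b a + RInt (fun t => phi (a + b - t)) b a).
  { exact (@RInt_plus R_CompleteNormedModule _ _ b a (phi_ex b a) Hex2). }
  lra.
Qed.

Theorem mainTheorem13 (a b : R) :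
  Rabs (Phi a - Phi b) >= Rabs (a - b) * sqrt (phi a * phi b).
Proof.
  destruct (Rle_or_lt b a) as [H|H].
  - rewrite Phi_diff. pose proof (main_le a b H). pose proof (I_nonneg b a H).
    rewrite !Rabs_right by lra. auto.
  - rewrite Rabs_minus_sym, (Rabs_minus_sym a b), Phi_diff, (Rmult_comm (phi a)).
    pose proof (main_le b a (Rlt_le _ _ H)). pose proof (I_nonneg a b (Rlt_le _ _ H)).
    rewrite !Rabs_right by lra. auto.
Qed.
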